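(* Let $\Delta$ be a tree with vertices $x_1,\ldots,x_n$, let $k$ be a field, and let $I=\mathcal{F}(\Delta)$ be its facet ideal in $R=k[x_1,\ldots,x_n]$. Then for any prime ideal $p$ of $R$, the facet complex $\Delta_{\mathcal{F}}(I_p)$ is a forest.
   Context: A simplicial complex on a vertex set $V$ is a collection of subsets of $V$ containing all singletons and closed under subsets; its facets are its maximal faces. Vertices are identified with variables. The facet ideal $\mathcal{F}(\Delta)$ is generated by the monomials $\prod_{x_j\in F}x_j$, $F$ a facet. If $I=(M_1,\ldots,M_q)$ with square-free monomials $M_i$, then $I_p$ is generated by the monomials $M_i'$ obtained from $M_i$ by deleting all variables not in $p$ (which are units in $R_p$); the facet complex $\Delta_{\mathcal{F}}(I_p)$ is the simplicial complex whose facets are the supports $\{x_j : x_j\mid M_i'\}$ of the minimal ones among the monomials $M_1',\ldots,M_q'$. A subcomplex of $\Delta$ is a simplicial complex whose facet set is a subset of the facet set of $\Delta$. $\Delta$ is connected if any two facets are joined by a chain of facets with consecutive members intersecting. A facet $F$ is a leaf of $\Delta$ if either $F$ is the only facet, or there is a facet $G\neq F$ with $F\cap F'\subseteq F\cap G$ for every facet $F'\neq F$. A connected $\Delta$ is a tree if every nonempty subcomplex has a leaf. A simplicial complex is a forest if every nonempty subcomplex has a leaf (equivalently, every connected component is a tree). *)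

(* Defs.v *)
From HB Require Import structures.
From mathcomp Require Import all_boot all_algebra.
From mathcomp Require Import ring_quotient.
From mathcomp Require Import mpoly.

Set Implicit Arguments.
Unset Strict Implicit.
Unset Printing Implicit Defensive.

(* A simplicial complex on the vertex set {x_1,...,x_n} (vertex x_{j+1} is
   identified with j : 'I_n, i.e. with the variable 'X_j of {mpoly k[n]}) is
   represented by its set of facets D : {set {set 'I_n}}. *)

Section Complexes.
Variable n : nat.
Notation face := {set 'I_n}.

Definition is_facet_set (D : {set face}) : Prop :=
  (forall F G, F \in D -> G \in D -> F \subset G -> F = G) /\
  (forall v : 'I_n, exists2 F, F \in D & v \in F).

Definition is_leaf (D : {set face}) (F : face) : Prop :=
  F \in D /\
  (D = [set F] \/
   exists2 G, G \in D /\ G != F &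
     forall F', F' \in D -> F' != F -> F :&: F' \subset F :&: G).

Definition facet_adj (D : {set face}) : rel face :=
  fun A B => [&& A \in D, B \in D & A :&: B != set0].

Definition connected_cx (D : {set face}) : Prop :=
  forall F G, F \in D -> G \in D -> connect (facet_adj D) F G.

Definition forest (D : {set face}) : Prop :=
  forall D' : {set face}, D' \subset D -> D' != set0 -> exists F, is_leaf D' F.

Definition tree (D : {set face}) : Prop := connected_cx D /\ forest D.

(* Facet complex of I_p, where S is the set of variables lying in p:
   the monomials M_F' have supports F :&: S; the facets are the minimal
   (under divisibility, i.e. inclusion of supports) ones among them. *)
Definition loc_supports (D : {set face}) (S : face) : {set face} :=
  [set F :&: S | F in D].

Definition loc_facets (D : {set face}) (S : face) : {set face} :=
  [set G in loc_supports D S |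
     [forall H in loc_supports D S, ~~ (H \proper G)]].

End Complexes.

Definition vars_in (k : fieldType) (n : nat) (p : {pred {mpoly k[n]}})
  : {set 'I_n} := [set j : 'I_n | 'X_j \in p].

(* Main.v *)
Require Import Defs.
From HB Require Import structures.
From mathcomp Require Import all_boot all_algebra.
From mathcomp Require Import ring_quotient.
From mathcomp Require Import mpoly.

Lemma loc_forest (n : nat) (D : {set {set 'I_n}}) (S : {set 'I_n}) :
  forest D -> forest (loc_facets D S).
Proof.
move=> fD E sE nE.
pose f (G : {set 'I_n}) := odflt set0 [pick F in D | F :&: S == G].
have hf : forall G, G \in E -> f G \in D /\ f G :&: S = G.
  move=> G GE.
  have := subsetP sE G GE; rewrite inE => /andP[/imsetP[F FD ->] _].
  rewrite /f; case: pickP => [F' /andP[F'D /eqP ->] //|/(_ F)].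
  by rewrite FD eqxx.
have finj : forall G G', G \in E -> G' \in E -> f G = f G' -> G = G'.
  move=> G G' GE G'E e.
  by rewrite -(hf G GE).2 -(hf G' G'E).2 e.
have sub : f @: E \subset D.
  by apply/subsetP => F /imsetP[G GE ->]; exact: (hf G GE).1.
have ne : f @: E != set0.
  case/set0Pn: nE => G GE; apply/set0Pn; exists (f G); exact: imset_f.
have [F [FD' Hl]] := fD _ sub ne.
case/imsetP: FD' => G0 G0E eF.
exists G0; split; first done.
case: Hl => [Heq | [Fh [FhD Fhne] Hsub]].
  left; apply/setP => G; rewrite in_set1; apply/idP/eqP; last by move->.
  move=> GE; have : f G \in f @: E by exact: imset_f.
  rewrite Heq in_set1 eF => /eqP; exact: finj.
right.
case/imsetP: FhD => H0 H0E eH.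
exists H0.
  split; first done.
  apply/eqP => e; move/eqP: Fhne; apply; by rewrite eH eF e.
move=> G' G'E G'ne.
have hne : f G' != F.
  apply/eqP => e; move/eqP: G'ne; apply; apply: finj => //; by rewrite e.
have := Hsub (f G') (imset_f f G'E) hne.
rewrite eF eH => h.
rewrite -(hf G0 G0E).2 -(hf G' G'E).2 -(hf H0 H0E).2.
rewrite !(setIACA _ S) !setIid.
exact: setSI.
Qed.

Theorem mainTheorem5 (k : fieldType) (n : nat) (D : {set {set 'I_n}})
  (p : {pred {mpoly k[n]}}) :
  is_facet_set D -> tree D ->
  idealr_closed p -> prime_idealr_closed p ->
  forest (loc_facets D (vars_in p)).
Proof.
move=> _ [_ fD] _ _; exact: loc_forest.
Qed.
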